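(* Let $\tau$ be a $T_1$-topology on $\mathcal{C}(p,q)$ such that $(\mathcal{C}(p,q),\tau)$ is a semitopological semigroup. If there exists a point $q^ip^j\in\mathcal{C}(p,q)$ such that the subspace $\updownarrow_{\preceq}q^ip^j$ is quasi-regular at $q^ip^j$, then for every point $q^mp^n\in\mathcal{C}(p,q)$ the subspace $\updownarrow_{\preceq}q^mp^n$ is quasi-regular at $q^mp^n$.
   Context: The bicyclic monoid $\mathcal{C}(p,q)$ is the monoid generated by $p,q$ subject only to $pq=1$; elements are uniquely $q^ip^j$, $i,j\in\omega$, with multiplication $q^kp^l\cdot q^mp^n = q^{k-l+m}p^n$ if $l<m$, $=q^kp^n$ if $l=m$, $=q^kp^{l-m+n}$ if $l>m$. Natural partial order: $q^ip^j\preceq q^sp^t$ iff $i\ge s$ and $i-j=s-t$; $\updownarrow_{\preceq}x=\{y:x\preceq y\}\cup\{y:y\preceq x\}$. Semitopological semigroup: multiplication separately continuous. A subspace $Y$ is quasi-regular at $x\in Y$ if for every open neighbourhood $U$ of $x$ in $Y$ there is a nonempty open $V\subseteq Y$ with $\mathrm{cl}_Y(V)\subseteq U$. *)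

(* Defs.v *)
From Stdlib Require Import Arith.

(* The element q^i p^j of the bicyclic monoid C(p,q) is encoded as (i, j). *)
Definition bicyclic : Type := (nat * nat)%type.

Definition bmul (x y : bicyclic) : bicyclic :=
  let '(k, l) := x in let '(m, n) := y in
  if Nat.ltb l m then (k + (m - l), n)
  else if Nat.eqb l m then (k, n)
  else (k, l - m + n).

(* Natural partial order: q^i p^j <= q^s p^t iff i >= s and i - j = s - t. *)
Definition ble (x y : bicyclic) : Prop :=
  let '(i, j) := x in let '(s, t) := y in s <= i /\ i + t = s + j.

Definition updown (x : bicyclic) : bicyclic -> Prop :=
  fun y => ble x y \/ ble y x.

Definition is_topology (open : (bicyclic -> Prop) -> Prop) : Prop :=
  open (fun _ => True) /\
  open (fun _ => False) /\
  (forall (I : Type) (F : I -> bicyclic -> Prop),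
      (forall i, open (F i)) -> open (fun x => exists i, F i x)) /\
  (forall U V, open U -> open V -> open (fun x => U x /\ V x)).

Definition T1 (open : (bicyclic -> Prop) -> Prop) : Prop :=
  forall x y : bicyclic, x <> y -> exists U, open U /\ U x /\ ~ U y.

Definition semitopological (open : (bicyclic -> Prop) -> Prop) : Prop :=
  forall a : bicyclic, forall U, open U ->
    open (fun x => U (bmul a x)) /\ open (fun x => U (bmul x a)).

Definition sub_open (open : (bicyclic -> Prop) -> Prop) (Y U : bicyclic -> Prop)
  : Prop :=
  (forall y, U y -> Y y) /\ exists W, open W /\ forall y, U y <-> (W y /\ Y y).

Definition sub_closure (open : (bicyclic -> Prop) -> Prop) (Y V : bicyclic -> Prop)
  : bicyclic -> Prop :=
  fun y => Y y /\ forall W, sub_open open Y W -> W y -> exists z, W z /\ V z.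

Definition quasi_regular_at (open : (bicyclic -> Prop) -> Prop)
    (Y : bicyclic -> Prop) (x : bicyclic) : Prop :=
  forall U, sub_open open Y U -> U x ->
    exists V, sub_open open Y V /\ (exists v, V v) /\
      (forall y, sub_closure open Y V y -> U y).

(* Main.v *)
Require Import Defs.
From Stdlib Require Import Arith Lia Classical FunctionalExtensionality PropExtensionality.

Definition cont (open : (bicyclic -> Prop) -> Prop) (h : bicyclic -> bicyclic) :=
  forall W, open W -> open (fun x => W (h x)).

Lemma open_ext (open : (bicyclic -> Prop) -> Prop) (A B : bicyclic -> Prop) :
  open A -> (forall x, A x <-> B x) -> open B.
Proof.
  intros HA H. assert (A = B) as E.
  { apply functional_extensionality; intro x; apply propositional_extensionality; auto. }
  subst; auto.
Qed.

Lemma QR_ext open (Y Y' : bicyclic -> Prop) x :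
  (forall y, Y y <-> Y' y) -> quasi_regular_at open Y x -> quasi_regular_at open Y' x.
Proof.
  intros H HQ. assert (Y = Y') as E.
  { apply functional_extensionality; intro y; apply propositional_extensionality; auto. }
  subst; auto.
Qed.

Lemma open_neq open : is_topology open -> T1 open -> forall c : bicyclic, open (fun y => y <> c).
Proof.
  intros [_ [_ [Hun _]]] HT c.
  set (I := {p : bicyclic * (bicyclic -> Prop) | fst p <> c /\ open (snd p) /\ snd p (fst p) /\ ~ snd p c}).
  pose proof (Hun I (fun i => snd (proj1_sig i)) (fun i => proj1 (proj2 (proj2_sig i)))) as Ho.
  apply (open_ext _ _ _ Ho). intro x; split.
  - intros [[[y U] [H1 [H2 [H3 H4]]]] Hx]. simpl in *. intro E; subst; auto.
  - intro Hx. destruct (HT x c Hx) as [U [HU [Ux Uc]]].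
    exists (exist _ (x, U) (conj Hx (conj HU (conj Ux Uc)))). simpl. auto.
Qed.

Lemma in_cl open (Y V : bicyclic -> Prop) v :
  sub_open open Y V -> V v -> sub_closure open Y V v.
Proof.
  intros [HVY _] Vv. split; auto. intros W _ Wv. exists v; auto.
Qed.

Lemma TL open (Y Z : bicyclic -> Prop) y0 z0 (al be : bicyclic -> bicyclic) (O : bicyclic -> Prop) :
 is_topology open -> cont open al -> cont open be -> open O ->
 (forall z, Z z -> Y (al z)) -> Y y0 -> O y0 -> be y0 = z0 ->
 (forall y, Y y -> O y -> exists z, Z z /\ al z = y) ->
 (forall z, Z z -> O (al z) -> be (al z) = z) ->
 quasi_regular_at open Y y0 -> quasi_regular_at open Z z0.
Proof.
  intros Ht Ha Hb HO HZY Hy0 HOy0 Hbz Hsurj Hinv HQR U [HUZ [W [HW HUW]]] Uz0.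
  destruct Ht as [_ [_ [_ Hint]]].
  destruct (HQR (fun y => Y y /\ O y /\ W (be y))) as [V [[HVY [WV [HWV HVW]]] [[v Vv] Hcl]]].
  - split. intros y [? _]; auto. exists (fun y => O y /\ W (be y)). split.
    apply Hint; auto. intro y; tauto.
  - split; [auto|split; auto]. rewrite Hbz. apply HUW in Uz0. tauto.
  - exists (fun z => Z z /\ WV (al z)). split; [|split].
    + split. intros y [? _]; auto. exists (fun z => WV (al z)). split. apply Ha; auto. intro; tauto.
    + assert (HV : sub_open open Y V) by (split; auto; exists WV; auto).
      destruct (Hcl v (in_cl _ _ _ _ HV Vv)) as [Yv [Ov _]].
      destruct (Hsurj v Yv Ov) as [z [Zz E]]. exists z. split; auto. rewrite E. apply HVW in Vv; tauto.
    + intros z [Zz Hz].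
      assert (Hc : sub_closure open Y V (al z)).
      { split. auto. intros W3 [HW3Y [W4 [HW4 HW34]]] W3a.
        destruct (Hz (fun u => Z u /\ W4 (al u))) as [w [[Zw W4w] [Zw' WVw]]].
        - split. tauto. exists (fun u => W4 (al u)). split. apply Ha; auto. intro; tauto.
        - split; auto. apply HW34 in W3a; tauto.
        - exists (al w). split. apply HW34. split; auto. apply HVW. split; auto. }
      apply Hcl in Hc. destruct Hc as [_ [HOa HWb]]. rewrite Hinv in HWb; auto. apply HUW; auto.
Qed.

Lemma M4abs open (Y : bicyclic -> Prop) x0 f g :
  is_topology open -> T1 open -> cont open f -> cont open g ->
  (forall y, Y y -> Y (f y)) -> (forall y, Y y -> Y (g y)) -> Y x0 -> g x0 = x0 ->
  (forall y, g (f y) = y) -> (forall y, Y y -> y <> x0 -> f (g y) = y) -> f x0 <> x0 ->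
  quasi_regular_at open Y x0 -> quasi_regular_at open Y (f x0).
Proof.
  intros Ht HT Hf Hg HfY HgY Yx0 Hg0 Hgf Hfg Hfx0 HQR U [HUY [W [HW HUW]]] Ux1.
  pose proof (open_neq _ Ht HT) as Hneq.
  destruct Ht as [_ [_ [_ Hint]]].
  destruct (HQR (fun y => Y y /\ W (f (g y)) /\ y <> f x0)) as [V [[HVY [WV [HWV HVW]]] [[v Vv] Hcl]]].
  - split. intros y [? _]; auto. exists (fun y => W (f (g y)) /\ y <> f x0). split.
    apply Hint. exact (Hg _ (Hf _ HW)). apply Hneq. intro; tauto.
  - split; auto. rewrite Hg0. split. apply HUW in Ux1; tauto. auto.
  - assert (HV : sub_open open Y V) by (split; auto; exists WV; auto).
    destruct (classic (sub_closure open Y V x0)) as [Hc0 | Hnc0].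
    2:{ exists V. split; auto. split. exists v; auto. intros y Hy.
        destruct (Hcl y Hy) as [Yy [Wfg Hne]].
        assert (y <> x0) by (intro; subst; contradiction).
        rewrite Hfg in Wfg; auto. apply HUW; auto. }
    destruct (classic (V x0)) as [Vx0 | nVx0].
    2:{ exfalso. assert (Hc1 : sub_closure open Y V (f x0)).
        { split. apply HfY; auto. intros W3 [HW3Y [W4 [HW4 HW34]]] W3x1.
          destruct Hc0 as [_ Hc0].
          destruct (Hc0 (fun y => Y y /\ W4 (f (g y)))) as [z [[Yz W4z] Vz]].
          - split; [tauto|]. exists (fun y => W4 (f (g y))); split; [exact (Hg _ (Hf _ HW4)) | intro; tauto].
          - split; auto. rewrite Hg0. apply HW34 in W3x1; tauto.
          - assert (z <> x0) by (intro; subst; contradiction).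
            exists z. split; auto. apply HW34. rewrite Hfg in W4z; auto. }
        apply Hcl in Hc1. destruct Hc1 as [_ [_ H]]. congruence. }
    assert (Hnc1 : ~ sub_closure open Y V (f x0)).
    { intro H. apply Hcl in H. destruct H as [_ [_ H]]. congruence. }
    assert (exists W3, sub_open open Y W3 /\ W3 (f x0) /\ forall z, W3 z -> ~ V z) as
      [W3 [[HW3Y [W4 [HW4 HW34]]] [W3x1 Hdisj]]].
    { apply NNPP; intro Hn. apply Hnc1. split. auto. intros W3 HW3 W3x1.
      apply NNPP; intro Hn2. apply Hn. exists W3. split; auto. split; auto.
      intros z Hz Vz. apply Hn2; eauto. }
    destruct (HQR (fun y => Y y /\ W (f y) /\ W4 (f y))) as [V2 [[HV2Y [WV2 [HWV2 HV2W]]] [[v2 Vv2] Hcl2]]].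
    + split. intros y [? _]; auto. exists (fun y => W (f y) /\ W4 (f y)). split.
      apply Hint; auto. intro; tauto.
    + split; auto. split. apply HUW in Ux1; tauto. apply HW34 in W3x1; tauto.
    + assert (HV2 : sub_open open Y V2) by (split; auto; exists WV2; auto).
      exists (fun y => Y y /\ y <> x0 /\ WV2 (g y)). split; [|split].
      * split. intros y [? _]; auto. exists (fun y => y <> x0 /\ WV2 (g y)). split.
        apply Hint. apply Hneq. apply Hg; auto. intro; tauto.
      * exists (f v2). split. apply HfY; auto. split.
        -- intro E. apply Hfx0. assert (g (f v2) = g x0) by congruence.
           rewrite Hgf in H. subst v2. rewrite Hg0 in E. exact E.
        -- rewrite Hgf. apply HV2W in Vv2; tauto.
      * intros y [Yy Hy].
        assert (y <> x0).
        { intro E; subst y. destruct (Hy V HV Vx0) as [z [Vz [Yz [nz WV2z]]]].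
          assert (V2 (g z)) by (apply HV2W; split; auto).
          destruct (Hcl2 _ (in_cl _ _ _ _ HV2 H)) as [_ [_ H4]].
          rewrite Hfg in H4; auto. apply (Hdisj z); auto. apply HW34; auto. }
        assert (Hc2 : sub_closure open Y V2 (g y)).
        { split. apply HgY; auto. intros W5 [HW5Y [W6 [HW6 HW56]]] W5gy.
          destruct (Hy (fun z => Y z /\ W6 (g z))) as [z [[Yz W6z] [_ [_ WV2z]]]].
          - split. tauto. exists (fun z => W6 (g z)). split. apply Hg; auto. intro; tauto.
          - split; auto. apply HW56 in W5gy; tauto.
          - exists (g z). split. apply HW56; split; auto. apply HV2W; split; auto. }
        apply Hcl2 in Hc2. destruct Hc2 as [_ [Wfgy _]]. rewrite Hfg in Wfgy; auto. apply HUW; auto.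
Qed.
Definition fF (x : bicyclic) : bicyclic := let '(a,b) := x in (S a, S b).
Definition gF (x : bicyclic) : bicyclic := match x with (S a, S b) => (a,b) | y => y end.
Definition lq (x : bicyclic) : bicyclic := let '(a,b) := x in (S a, b).
Definition lp (x : bicyclic) : bicyclic := match x with (S a, b) => (a,b) | (0,b) => (0, S b) end.
Definition rp (x : bicyclic) : bicyclic := let '(a,b) := x in (a, S b).
Definition rq (x : bicyclic) : bicyclic := match x with (a, S b) => (a,b) | (a,0) => (S a, 0) end.

Lemma fF_eq x : bmul (bmul (1,0) x) (0,1) = fF x.
Proof. destruct x as [[|a] [|b]]; cbn; f_equal; lia. Qed.
Lemma gF_eq x : bmul (bmul (0,1) x) (1,0) = gF x.
Proof. destruct x as [[|[|a]] [|[|b]]]; cbn; f_equal; lia. Qed.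
Lemma lq_eq x : bmul (1,0) x = lq x.
Proof. destruct x as [[|a] b]; cbn; f_equal; lia. Qed.
Lemma lp_eq x : bmul (0,1) x = lp x.
Proof. destruct x as [[|[|a]] b]; cbn; f_equal; lia. Qed.
Lemma rp_eq x : bmul x (0,1) = rp x.
Proof. destruct x as [a [|b]]; cbn; f_equal; lia. Qed.
Lemma rq_eq x : bmul x (1,0) = rq x.
Proof. destruct x as [a [|[|b]]]; cbn; f_equal; lia. Qed.

Lemma cont_l open c h : semitopological open -> (forall x, bmul c x = h x) -> cont open h.
Proof.
  intros Hs E W HW. apply (open_ext _ _ _ (proj1 (Hs c W HW))). intro x; rewrite E; tauto.
Qed.
Lemma cont_r open c h : semitopological open -> (forall x, bmul x c = h x) -> cont open h.
Proof.
  intros Hs E W HW. apply (open_ext _ _ _ (proj2 (Hs c W HW))). intro x; rewrite E; tauto.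
Qed.
Lemma cont_lr open c d h : semitopological open -> (forall x, bmul (bmul c x) d = h x) -> cont open h.
Proof.
  intros Hs E W HW. apply (open_ext _ _ _ (proj1 (Hs c _ (proj2 (Hs d W HW))))).
  intro x; simpl; rewrite E; tauto.
Qed.

Lemma upd_iff i j y : updown (i,j) y <-> fst y + j = snd y + i.
Proof. destruct y as [a b]; unfold updown, ble; simpl; lia. Qed.

Definition P open a b := quasi_regular_at open (updown (a,b)) (a,b).

Section S.
Variable open : (bicyclic -> Prop) -> Prop.
Hypothesis Ht : is_topology open.
Hypothesis HT : T1 open.
Hypothesis Hs : semitopological open.

Lemma cfF : cont open fF. Proof. exact (cont_lr _ _ _ _ Hs fF_eq). Qed.
Lemma cgF : cont open gF. Proof. exact (cont_lr _ _ _ _ Hs gF_eq). Qed.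
Lemma clq : cont open lq. Proof. exact (cont_l _ _ _ Hs lq_eq). Qed.
Lemma clp : cont open lp. Proof. exact (cont_l _ _ _ Hs lp_eq). Qed.
Lemma crp : cont open rp. Proof. exact (cont_r _ _ _ Hs rp_eq). Qed.
Lemma crq : cont open rq. Proof. exact (cont_r _ _ _ Hs rq_eq). Qed.
Lemma oT : open (fun _ => True). Proof. exact (proj1 Ht). Qed.

Lemma M1 a b : P open (S a) (S b) -> P open a b.
Proof.
  apply (TL open _ _ _ _ fF gF (fun y => y <> (a - Nat.min a b, b - Nat.min a b)) Ht cfF cgF
    (open_neq _ Ht HT _)).
  - intros [c e]; rewrite !upd_iff; simpl; lia.
  - rewrite upd_iff; simpl; lia.
  - intro E; injection E; lia.
  - reflexivity.
  - intros [[|c] [|e]] H1 H2; rewrite upd_iff in H1; simpl in H1;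
      try (exfalso; apply H2; f_equal; lia).
    exists (c, e). split. rewrite upd_iff; simpl; lia. reflexivity.
  - intros [c e] _ _; reflexivity.
Qed.

Lemma M2 a b : 1 <= a -> 1 <= b -> P open a b -> P open (S a) (S b).
Proof.
  intros Ha Hb.
  apply (TL open _ _ _ _ gF fF (fun y => y <> (a - Nat.min a b, b - Nat.min a b)) Ht cgF cfF
    (open_neq _ Ht HT _)).
  - intros [[|c] [|e]]; rewrite !upd_iff; simpl; lia.
  - rewrite upd_iff; simpl; lia.
  - intro E; injection E; lia.
  - reflexivity.
  - intros [c e] H1 H2. exists (S c, S e). split. rewrite upd_iff in *; simpl in *; lia. reflexivity.
  - intros [[|c] [|e]] H1 H2; rewrite upd_iff in H1; simpl in *;
      try (exfalso; apply H2; f_equal; lia); reflexivity.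
Qed.

Lemma M4 a b : (a = 0 \/ b = 0) -> P open a b -> P open (S a) (S b).
Proof.
  intros Hab H. unfold P.
  apply (QR_ext _ (updown (a,b))). { intro y; rewrite !upd_iff; lia. }
  change (S a, S b) with (fF (a,b)).
  apply (M4abs open _ _ fF gF Ht HT cfF cgF); auto.
  - intros [c e]; rewrite !upd_iff; simpl; lia.
  - intros [[|c] [|e]]; rewrite !upd_iff; simpl; lia.
  - rewrite upd_iff; simpl; lia.
  - destruct Hab; subst; [reflexivity| destruct a; reflexivity].
  - intros [c e]; reflexivity.
  - intros [[|c] [|e]] H1 H2; rewrite upd_iff in H1; simpl in *;
      try (exfalso; apply H2; f_equal; lia); reflexivity.
  - simpl. intro E; injection E; lia.
Qed.

Lemma Up a b : P open a b -> P open (S a) (S b).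
Proof.
  destruct a as [|a]; [apply M4; auto|]. destruct b as [|b]; [apply M4; auto|].
  apply M2; lia.
Qed.

Lemma S1f d : P open d 0 -> P open (S d) 0.
Proof.
  apply (TL open _ _ _ _ lp lq (fun _ => True) Ht clp clq oT).
  - intros [[|c] e]; rewrite !upd_iff; simpl; lia.
  - rewrite upd_iff; simpl; lia.
  - auto.
  - reflexivity.
  - intros [c e] H1 _. exists (S c, e). split. rewrite upd_iff in *; simpl in *; lia. reflexivity.
  - intros [[|c] e] H1 _; rewrite upd_iff in H1; simpl in *; [lia|reflexivity].
Qed.

Lemma S1b d : P open (S d) 0 -> P open d 0.
Proof.
  apply (TL open _ _ _ _ lq lp (fun _ => True) Ht clq clp oT).
  - intros [c e]; rewrite !upd_iff; simpl; lia.
  - rewrite upd_iff; simpl; lia.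
  - auto.
  - reflexivity.
  - intros [[|c] e] H1 _; rewrite upd_iff in H1; simpl in H1; [lia|].
    exists (c, e). split. rewrite upd_iff; simpl; lia. reflexivity.
  - intros [c e] _ _; reflexivity.
Qed.

Lemma S2f e : P open 0 e -> P open 0 (S e).
Proof.
  apply (TL open _ _ _ _ rq rp (fun _ => True) Ht crq crp oT).
  - intros [c [|f]]; rewrite !upd_iff; simpl; lia.
  - rewrite upd_iff; simpl; lia.
  - auto.
  - reflexivity.
  - intros [c f] H1 _. exists (c, S f). split. rewrite upd_iff in *; simpl in *; lia. reflexivity.
  - intros [c [|f]] H1 _; rewrite upd_iff in H1; simpl in *; [lia|reflexivity].
Qed.

Lemma S2b e : P open 0 (S e) -> P open 0 e.
Proof.
  apply (TL open _ _ _ _ rp rq (fun _ => True) Ht crp crq oT).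
  - intros [c f]; rewrite !upd_iff; simpl; lia.
  - rewrite upd_iff; simpl; lia.
  - auto.
  - reflexivity.
  - intros [c [|f]] H1 _; rewrite upd_iff in H1; simpl in H1; [lia|].
    exists (c, f). split. rewrite upd_iff; simpl; lia. reflexivity.
  - intros [c f] _ _; reflexivity.
Qed.

Lemma Downk k : forall a b, P open (a + k) (b + k) -> P open a b.
Proof.
  induction k; intros a b H. rewrite !Nat.add_0_r in H; auto.
  apply IHk. apply M1. rewrite <- !Nat.add_succ_r. auto.
Qed.

Lemma Upk k : forall a b, P open a b -> P open (a + k) (b + k).
Proof.
  induction k; intros a b H. rewrite !Nat.add_0_r; auto.
  rewrite !Nat.add_succ_r. apply Up. auto.
Qed.

Lemma S1down d : P open d 0 -> P open 0 0.
Proof. induction d; auto. intro; apply IHd, S1b; auto. Qed.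
Lemma S1up d : P open 0 0 -> P open d 0.
Proof. induction d; auto. intro; apply S1f; auto. Qed.
Lemma S2down d : P open 0 d -> P open 0 0.
Proof. induction d; auto. intro; apply IHd, S2b; auto. Qed.
Lemma S2up d : P open 0 0 -> P open 0 d.
Proof. induction d; auto. intro; apply S2f; auto. Qed.

Lemma P00 i j : P open i j -> P open 0 0.
Proof.
  intro H. destruct (le_ge_dec i j).
  - apply (S2down (j - i)). apply (Downk i). replace (0 + i) with i by lia.
    replace (j - i + i) with j by lia. auto.
  - apply (S1down (i - j)). apply (Downk j). replace (0 + j) with j by lia.
    replace (i - j + j) with i by lia. auto.
Qed.

Lemma Pall m n : P open 0 0 -> P open m n.
Proof.
  intro H. destruct (le_ge_dec m n).
  - replace m with (0 + m) by lia. replace n with (n - m + m) by lia.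
    apply Upk. apply S2up; auto.
  - replace n with (0 + n) by lia. replace m with (m - n + n) by lia.
    apply Upk. apply S1up; auto.
Qed.
End S.

Theorem lemma4 (open : (bicyclic -> Prop) -> Prop) :
  is_topology open -> T1 open -> semitopological open ->
  (exists i j : nat, quasi_regular_at open (updown (i, j)) (i, j)) ->
  forall m n : nat, quasi_regular_at open (updown (m, n)) (m, n).
Proof.
  intros Ht HT Hs [i [j H]] m n.
  apply (Pall open Ht HT Hs). apply (P00 open Ht HT Hs i j). exact H.
Qed.
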